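(* Let $1\le t\le n$. If $S\subseteq N$ is an equivalence class with respect to connectedness within some $t$-switchable subset of $N$, then the ideal $\tilde{\mathcal{I}}^{\langle t\rangle}_S=(f_{i,a,b}: i\in[t],\ a,b\text{ connected in } S)$ of $R$ is prime.
   Context: Fix positive integers $n, r_1,\dots,r_n$, let $N=[r_1]\times\cdots\times[r_n]$, and let $R$ be the polynomial ring over a field in the variables $x_a$, $a\in N$. For $a,b\in N$ and $i\in[n]$, ${\rm s}(i,a,b)\in N$ has $i$-th component $b_i$ and other components equal to those of $a$. Let $d(a,b)=\#\{j: a_j\neq b_j\}$ and $f_{i,a,b}=x_ax_b-x_{{\rm s}(i,a,b)}x_{{\rm s}(i,b,a)}$. A subset $T\subseteq N$ is $t$-switchable if for all $a,b\in T$ with $d(a,b)=2$ and all $i\in[t]$, ${\rm s}(i,a,b)\in T$. Elements $a,b$ of a subset $T$ are connected in $T$ if there are $a_0=a,\dots,a_k=b$ in $T$ with $d(a_{j-1},a_j)\le 1$ for all $j$; this is an equivalence relation on $T$. *)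

(* Defs.v *)
From HB Require Import structures.
From mathcomp Require Import all_boot all_algebra.
From mathcomp Require Import mpoly.
Set Implicit Arguments. Unset Strict Implicit. Unset Printing Implicit Defensive.
Import GRing.Theory.
Local Open Scope ring_scope.

(* N = [r_1] x ... x [r_n], coordinates zero-based: component i lies in 'I_(r i). *)
Definition Ngrid (n : nat) (r : 'I_n -> nat) : finType :=
  {dffun forall i : 'I_n, 'I_(r i)}.

Section Grid.
Variables (n : nat) (r : 'I_n -> nat).
Local Notation N := (Ngrid r).

Definition sw (i : 'I_n) (a b : N) : N :=
  [ffun j => if j == i then b j else a j].

Definition dist (a b : N) : nat := #|[set j | a j != b j]|.

Definition switchable (t : nat) (T : {set N}) : Prop :=
  forall a b, a \in T -> b \in T -> dist a b = 2 ->
    forall i : 'I_n, (i < t)%N -> sw i a b \in T.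

Definition adjT (T : {set N}) : rel N :=
  fun x y => [&& x \in T, y \in T & (dist x y <= 1)%N].

Definition connectedIn (T : {set N}) (a b : N) : bool :=
  [&& a \in T, b \in T & connect (adjT T) a b].

Definition conn_class (T S : {set N}) : Prop :=
  exists2 a, a \in T & S = [set b | connectedIn T a b].

Variable K : fieldType.
Definition Rpoly := {mpoly K[#|{: N}|]}.
Definition xv (a : N) : Rpoly := 'X_(enum_rank a).

Definition fgen (i : 'I_n) (a b : N) : Rpoly :=
  xv a * xv b - xv (sw i a b) * xv (sw i b a).
End Grid.

Definition in_ideal (A : comNzRingType) (G : A -> Prop) (p : A) : Prop :=
  exists s : seq (A * A), (forall x, x \in s -> G x.2) /\
    p = \sum_(x <- s) x.1 * x.2.

Definition prime_ideal (A : comNzRingType) (I : A -> Prop) : Prop :=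
  ~ I 1 /\ forall p q, I (p * q) -> I p \/ I q.

Definition gensIS (K : fieldType) (n : nat) (r : 'I_n -> nat) (t : nat)
  (S : {set Ngrid r}) (p : Rpoly r K) : Prop :=
  exists i : 'I_n, exists a b : Ngrid r,
    [/\ (i < t)%N, connectedIn S a b & p = fgen K i a b].

(* Main.v *)
Require Import Defs.
From HB Require Import structures.
From mathcomp Require Import all_boot all_algebra.
From mathcomp Require Import mpoly.
From mathcomp Require Import zify.
Set Implicit Arguments. Unset Strict Implicit. Unset Printing Implicit Defensive.
Import GRing.Theory.
Local Open Scope ring_scope.

Section Comb.
Variables (n : nat) (r : 'I_n -> nat) (t : nat).
Local Notation N := (Ngrid r).

Lemma swE i (a b : N) j : sw i a b j = if j == i then b j else a j.
Proof. by rewrite /sw ffunE. Qed.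

Lemma dist_sym (a b : N) : dist a b = dist b a.
Proof. by rewrite /dist; apply: eq_card => j; rewrite !inE eq_sym. Qed.

Lemma adjT_sym (X : {set N}) : ssrbool.symmetric (adjT X).
Proof. by move=> x y; rewrite /adjT dist_sym andbCA. Qed.

Lemma sw_same i (b : N) : sw i b b = b.
Proof. by apply/ffunP => j; rewrite swE; case: eqP. Qed.

Lemma dist_le1_sw i (y z w : N) : (dist y z <= 1)%N -> (dist (sw i y w) (sw i z w) <= 1)%N.
Proof.
move=> h; apply: leq_trans h; apply: subset_leq_card; apply/subsetP => j.
rewrite !inE !swE; by case: (j == i); rewrite ?eqxx.
Qed.

Variables (T : {set N}) (a0 : N).
Hypothesis hT : switchable t T.
Hypothesis a0T : a0 \in T.
Local Notation S := [set b | connectedIn T a0 b].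

Lemma S_T b : b \in S -> b \in T.
Proof. by rewrite inE => /and3P[]. Qed.

Lemma a0S : a0 \in S.
Proof. by rewrite inE /connectedIn a0T connect0. Qed.

Lemma S_adj x y : x \in S -> adjT T x y -> y \in S.
Proof.
rewrite !inE /connectedIn => /and3P[-> _ cx] adj.
have := adj; rewrite /adjT => /and3P[_ -> _] /=.
exact: connect_trans cx (connect1 adj).
Qed.

Lemma S_conn x y : x \in S -> y \in S -> connect (adjT T) x y.
Proof.
rewrite !inE /connectedIn => /and3P[_ _ cx] /and3P[_ _ cy].
apply: connect_trans _ cy; rewrite (sym_connect_sym (@adjT_sym T)) //.
Qed.

Lemma L (i : 'I_n) (w : N) (hi : (i < t)%N) c x : c \in S -> sw i c w \in S -> x \in S -> sw i x w \in S.
Proof.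
move=> cS cwS xS; have /connectP[p pth ->] := S_conn cS xS.
elim: p c cS cwS pth {xS} => [|z p IH] y yS ywS //= /andP[adj pth].
apply: (IH z) => //; first exact: S_adj adj.
set u := sw i y w.
have uT : u \in T by exact: S_T.
have zT : z \in T by move: adj => /and3P[].
have dyz : (dist y z <= 1)%N by move: adj => /and3P[].
have swT : sw i z w \in T.
  case: (eqVneq (z i) (w i)) => [ziw | ziw].
    have -> : sw i z w = z by apply/ffunP => j; rewrite swE; case: eqP => // ->.
    done.
  case: (eqVneq (dist z u) 2) => D.
    have := hT zT uT D hi.
    have -> // : sw i z u = sw i z w.
    by apply/ffunP => j; rewrite !swE; case: eqP => // ->; rewrite swE eqxx.
  have -> : sw i z w = u.
    apply/ffunP => j; rewrite /u !swE; case: (eqVneq j i) => // ji.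
    apply/eqP; apply: contraT => nzy.
    have zu : z j != u j by rewrite /u swE (negbTE ji).
    have Aub : (dist z u <= 2)%N.
      rewrite /dist; apply: (leq_trans (subset_leq_card (_ : _ \subset i |: [set k | z k != y k]))).
        apply/subsetP => k; rewrite !inE /u swE; case: (k == i) => //=.
      rewrite cardsU1 (_ : #|[set k | z k != y k]| = dist y z); last by rewrite dist_sym.
      by move: dyz; case: (_ \in _); case: (dist y z) => [|[|k]].
    have : (2 <= dist z u)%N.
      apply: (@leq_trans #|[set i; j]|); first by rewrite cards2 eq_sym ji.
      rewrite /dist.
      apply: subset_leq_card; apply/subsetP => k; rewrite !inE.
      case/orP => /eqP ->; last by [].
      by rewrite /u swE eqxx.
    move: D Aub; rewrite eqn_leq; case: (dist z u) => [|[|[|]]] //.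
  exact: uT.
apply: S_adj ywS _.
by rewrite /adjT uT swT dist_le1_sw.
Qed.

Lemma sw_S (i : 'I_n) (a b : N) : (i < t)%N -> a \in S -> b \in S -> sw i a b \in S.
Proof. by move=> hi aS bS; apply: (L hi bS _ aS); rewrite sw_same. Qed.

Lemma S_connS b c : b \in S -> c \in S -> connectedIn S b c.
Proof.
move=> bS cS; rewrite /connectedIn bS cS /=.
have sub : forall x p, x \in S -> path (adjT T) x p -> path (adjT S) x p.
  move=> x p; elim: p x => [|z p IH] x //= xS /andP[adj pth].
  have zS := S_adj xS adj.
  rewrite IH // andbT /adjT xS zS /=; by move: adj => /and3P[].
have /connectP[p pth ->] := S_conn bS cS.
by apply/connectP; exists p => //; apply: sub.
Qed.
End Comb.


Section Ideal.
Variables (A : comNzRingType) (G : A -> Prop).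
Lemma I0 : in_ideal G 0.
Proof. by exists [::]; split => //; rewrite big_nil. Qed.
Lemma IG x : G x -> in_ideal G x.
Proof.
move=> Gx; exists [:: (1, x)]; split; last by rewrite big_seq1 mul1r.
by move=> y; rewrite inE => /eqP ->.
Qed.
Lemma ID p q : in_ideal G p -> in_ideal G q -> in_ideal G (p + q).
Proof.
move=> [s1 [h1 ->]] [s2 [h2 ->]]; exists (s1 ++ s2); split; last by rewrite big_cat.
by move=> x; rewrite mem_cat => /orP[/h1|/h2].
Qed.
Lemma IM c p : in_ideal G p -> in_ideal G (c * p).
Proof.
move=> [s [h ->]]; exists [seq (c * x.1, x.2) | x <- s]; split.
  by move=> x /mapP[y ys ->] /=; exact: h.
by rewrite big_map mulr_sumr; apply: eq_bigr => x _; rewrite mulrA.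
Qed.
Lemma IN p : in_ideal G p -> in_ideal G (- p).
Proof. by move=> h; rewrite -mulN1r; apply: IM. Qed.
Lemma IB p q : in_ideal G p -> in_ideal G q -> in_ideal G (p - q).
Proof. by move=> hp hq; apply: ID => //; apply: IN. Qed.
End Ideal.

Section Alg.
Variables (n : nat) (r : 'I_n -> nat) (t : nat) (K : fieldType).
Local Notation N := (Ngrid r).
Variable S : {set N}.

Definition O := {dffun forall j : 'I_n, option 'I_(r j)}.
Definition U := ((N + O) + O)%type.
Definition kU := #|{: U}|.
Definition kN := #|{: N}|.
Definition uv (u : U) : 'X_{1..kU} := U_(enum_rank u)%MM.
Definition yc (i : 'I_n) (a : N) : O := [ffun j : 'I_n => if j == i then Some (a j) else None].
Definition zq (a : N) : O := [ffun j : 'I_n => if (j < t)%N then None else Some (a j)].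
Definition monoD (a : N) : 'X_{1..kU} :=
  if a \in S then (uv (inr (zq a)) + \sum_(i < n | (i < t)%N) uv (inl (inr (yc i a))))%MM
  else uv (inl (inl a)).
Local Notation mono := monoD.
Definition g (m : 'X_{1..kN}) : 'X_{1..kU} :=
  (\sum_(j < kN) mono (enum_val j) *+ m j)%MM.

Lemma uvE u u' : uv u (enum_rank u') = (u == u').
Proof. by rewrite /uv mnm1E (inj_eq enum_rank_inj). Qed.

Lemma monoE a u : mono a (enum_rank u) =
  if a \in S then ((inr (zq a) == u) + \sum_(i < n | (i < t)%N) (inl (inr (yc i a)) == u))%N
  else (inl (inl a) == u) :> nat.
Proof.
rewrite /monoD; case: (a \in S); last exact: uvE.
by rewrite mnmDE mnm_sumE uvE; congr (_ + _)%N; apply: eq_bigr => i _; rewrite uvE.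
Qed.

Lemma yc_inj (i i' : 'I_n) (a b : N) : (yc i' a == yc i b) = (i' == i) && (a i == b i).
Proof.
apply/eqP/andP => [/ffunP/(_ i')|[/eqP e /eqP ab]].
  rewrite !ffunE eqxx; case: eqP => // e; subst i' => -[->]; by rewrite !eqxx.
subst i'; apply/ffunP => j; rewrite !ffunE; case: eqP => // ->; by rewrite ab.
Qed.

Lemma C1 (a x : N) : mono a (enum_rank (inl (inl x) : U)) = (a \notin S) && (a == x).
Proof.
rewrite monoE; case: (a \in S) => /=.
  by rewrite big1 // => i _.
by [].
Qed.

Lemma C2 (i : 'I_n) (a b : N) : (i < t)%N -> mono a (enum_rank (inl (inr (yc i b)) : U)) = (a \in S) && (a i == b i).
Proof.
move=> hi; rewrite monoE; case: (a \in S) => //=.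
rewrite add0n (bigD1 i) //= big1 => [|i' /andP[_ ne]].
  by rewrite addn0 -[(inl _ == inl _)]/(inr _ == inr _ :> (N + O)%type) -[(inr _ == inr _)]/(yc i a == yc i b) yc_inj eqxx.
by rewrite -[(inl _ == inl _)]/(inr _ == inr _ :> (N + O)%type) -[(inr _ == inr _)]/(yc i' a == yc i b) yc_inj (negbTE ne).
Qed.

Lemma C3 (a b : N) : mono a (enum_rank (inr (zq b) : U)) = (a \in S) && (zq a == zq b).
Proof.
rewrite monoE; case: (a \in S) => //=.
by rewrite big1 ?addn0 // => i _.
Qed.

Lemma gE m k : g m k = (\sum_(j < kN) mono (enum_val j) k * m j)%N.
Proof. by rewrite /g mnm_sumE; apply: eq_bigr => j _; rewrite mulmnE. Qed.

Lemma gD m1 m2 : g (m1 + m2)%MM = (g m1 + g m2)%MM.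
Proof.
apply/mnmP => k; rewrite mnmDE !gE -big_split; apply: eq_bigr => j _.
by rewrite mnmDE mulnDr.
Qed.

Lemma gU a : g U_(enum_rank a)%MM = mono a.
Proof.
apply/mnmP => k; rewrite gE (bigD1 (enum_rank a)) //= big1 => [|j ne].
  by rewrite mnm1E eqxx muln1 addn0 enum_rankK.
by rewrite mnm1E eq_sym (negbTE ne) muln0.
Qed.

Lemma g0 : g 0%MM = 0%MM.
Proof. by apply/mnmP => k; rewrite gE mnm0E big1 // => j _; rewrite mnm0E muln0. Qed.

Lemma g_ge (m : 'X_{1..kN}) (j : 'I_kN) (k : 'I_kU) : (mono (enum_val j) k * m j <= g m k)%N.
Proof. by rewrite gE (bigD1 j) //= leq_addr. Qed.

Lemma g_pos (m : 'X_{1..kN}) (k : 'I_kU) : (0 < g m k)%N -> exists j, (0 < m j)%N /\ (0 < mono (enum_val j) k)%N.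
Proof.
rewrite gE; case: (pickP (fun j => (0 < m j) && (0 < mono (enum_val j) k))%N) => [j /andP[h1 h2]|none].
  by move=> _; exists j.
by rewrite big1 // => j _; have := none j; rewrite /= andbC; case: (mono _ k) => // ? ; case: (m j) => // ?; rewrite muln0.
Qed.
End Alg.


Section Main.
Variables (n : nat) (r : 'I_n -> nat) (t : nat) (K : fieldType).
Local Notation N := (Ngrid r).
Variables (T : {set N}) (a0 : N).
Hypothesis hT : switchable t T.
Hypothesis a0T : a0 \in T.
Local Notation S := [set b | connectedIn T a0 b].
Local Notation I := (in_ideal (@gensIS K n r t S)).
Local Notation rk := (@enum_rank N).
Local Notation mono := (monoD t S).
Local Notation g := (g t S).

Lemma yc_eq i (x y : N) : x i = y i -> yc i x = yc i y.
Proof. by move=> e; apply/ffunP => j; rewrite !ffunE; case: eqP => // ->; rewrite e. Qed.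

Lemma zq_sw (i : 'I_n) (x y : N) : (i < t)%N -> zq t (sw i x y) = zq t x.
Proof.
move=> hi; apply/ffunP => j; rewrite !ffunE; case: ltnP => // hj.
by case: eqP => // e; move: hj; rewrite e leqNgt hi.
Qed.

Lemma mono_sw (i : 'I_n) (b c : N) : (i < t)%N -> b \in S -> c \in S ->
  (mono b + mono c)%MM = (mono (sw i b c) + mono (sw i c b))%MM.
Proof.
move=> hi bS cS.
have b'S := sw_S hT hi bS cS; have c'S := sw_S hT hi cS bS.
rewrite /monoD bS cS b'S c'S !zq_sw //.
set Yb := (\sum_(i0 < n | _) _)%MM; set Yc := (\sum_(i0 < n | _) _)%MM.
set Yb' := (\sum_(i0 < n | _) _)%MM; set Yc' := (\sum_(i0 < n | _) _)%MM.
have e : (Yb + Yc = Yb' + Yc')%MM.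
  rewrite /Yb /Yc /Yb' /Yc' -!big_split /=; apply: eq_bigr => i' _.
  case: (eqVneq i' i) => [->|ne].
    rewrite (yc_eq (_ : sw i b c i = c i)) ?swE ?eqxx //.
    rewrite (yc_eq (_ : sw i c b i = b i)) ?swE ?eqxx //.
    exact: addmC.
  rewrite (yc_eq (_ : sw i b c i' = b i')) ?swE ?(negbTE ne) //.
  by rewrite (yc_eq (_ : sw i c b i' = c i')) ?swE ?(negbTE ne).
apply/mnmP => k; move/mnmP: e => /(_ k); rewrite !mnmDE => e.
by rewrite addnACA e addnACA.
Qed.


Lemma swapI (i : 'I_n) (b c : N) m2 : (i < t)%N -> b \in S -> c \in S ->
  I ('X_[m2 + (U_(rk b) + U_(rk c))] - 'X_[m2 + (U_(rk (sw i b c)) + U_(rk (sw i c b)))]).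
Proof.
move=> hi bS cS.
rewrite !mpolyXD -mulrBr; apply: IM; apply: IG.
exists i, b, c; split => //. exact: (@S_connS n r T a0 b c bS cS).
Qed.

Lemma inner (a : N) (m1 : 'X_{1..kN r}) : a \in S -> forall d (b : N) (m' : 'X_{1..kN r}),
  #|[set i : 'I_n | (i < t)%N && (b i != a i)]| = d -> b \in S -> zq t b = zq t a ->
  (0 < m' (rk b))%N -> g (m1 + U_(rk a))%MM = g m' ->
  exists m'', [/\ I ('X_[m'] - 'X_[m'']), g m'' = g m' & (0 < m'' (rk a))%N].
Proof.
move=> aS d; elim: d => [|d IH] b m' hd bS zb pb hg.
  have ab : a = b.
    apply/ffunP => j; case: (ltnP j t) => hj.
      move/eqP: hd; rewrite cards_eq0 => /eqP/setP/(_ j); rewrite !inE hj /=.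
      by move/negbT/negbNE/eqP.
    by move/ffunP: zb => /(_ j); rewrite !ffunE ltnNge hj /= => -[->].
  subst b; exists m'; split => //; rewrite subrr; exact: I0.
have : (0 < #|[set i : 'I_n | (i < t)%N && (b i != a i)]|)%N by rewrite hd.
case/card_gt0P => i; rewrite inE => /andP[hi ne].
have : (0 < g m' (enum_rank (inl (inr (yc i a)) : U r)))%N.
  by rewrite -hg gD gU mnmDE C2 // aS eqxx addn1.
case/g_pos => j [pj]; rewrite C2 // lt0b => /andP[cS /eqP ci].
set c := enum_val j in cS ci.
have rc : rk c = j by rewrite /c enum_valK.
have bc : rk b != rk c.
  apply/negP => /eqP /enum_rank_inj e; move: ne; by rewrite e ci eqxx.
have le : (U_(rk b) + U_(rk c) <= m')%MM.
  apply/mnm_lepP => k'; rewrite mnmDE !mnm1E.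
  case: (eqVneq (rk b) k') => [<-|nb]; first by rewrite eq_sym (negbTE bc).
  case: (eqVneq (rk c) k') => [<-|nc] //; by rewrite rc.
set m2 := (m' - (U_(rk b) + U_(rk c)))%MM.
have em : m' = (m2 + (U_(rk b) + U_(rk c)))%MM by rewrite /m2 submK.
set m3 := (m2 + (U_(rk (sw i b c)) + U_(rk (sw i c b))))%MM.
have I1 : I ('X_[m'] - 'X_[m3]) by rewrite {1}em; apply: swapI.
have g3 : g m3 = g m' by rewrite em /m3 !gD !gU (mono_sw hi bS cS).
have hd' : #|[set i' : 'I_n | (i' < t)%N && (sw i b c i' != a i')]| = d.
  move: hd; rewrite (cardsD1 i) inE hi ne /= add1n => -[<-].
  apply: eq_card => i'; rewrite !inE swE; case: (eqVneq i' i) => [->|_] /=; first by rewrite ci eqxx andbF.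
  by [].
have zb' : zq t (sw i b c) = zq t a by rewrite zq_sw.
have pb' : (0 < m3 (rk (sw i b c)))%N by rewrite !mnmDE mnm1E eqxx /=; lia.
have [m'' [I2 g'' p'']] := IH (sw i b c) m3 hd' (sw_S hT hi bS cS) zb' pb' (etrans hg (esym g3)).
exists m''; split => //; last by rewrite g'' g3.
have -> : 'X_[m'] - 'X_[m''] = ('X_[m'] - 'X_[m3]) + ('X_[m3] - 'X_[m'']) :> Rpoly r K by rewrite addrA subrK.
exact: ID.
Qed.

Lemma move_to (a : N) (m1 m' : 'X_{1..kN r}) : g (m1 + U_(rk a))%MM = g m' ->
  exists m'', [/\ I ('X_[m'] - 'X_[m'']), g m'' = g m' & (0 < m'' (rk a))%N].
Proof.
move=> hg; case: (boolP (a \in S)) => aS.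
  have: (0 < g m' (enum_rank (inr (zq t a) : U r)))%N by rewrite -hg gD gU mnmDE C3 aS eqxx addn1.
  case/g_pos => j [pj]; rewrite C3 lt0b => /andP[bS /eqP zb].
  apply: (inner aS erefl bS zb _ hg); by rewrite enum_valK.
have: (0 < g m' (enum_rank (inl (inl a) : U r)))%N by rewrite -hg gD gU mnmDE C1 aS eqxx addn1.
case/g_pos => j [pj]; rewrite C1 lt0b => /andP[_ /eqP ja].
exists m'; split => //; first by rewrite subrr; apply: I0.
by rewrite -ja enum_valK.
Qed.

Lemma key d : forall m m' : 'X_{1..kN r}, mdeg m = d -> g m = g m' -> I ('X_[m] - 'X_[m']).
Proof.
elim: d => [|d IH] m m' hd hg.
  have m0 : m = 0%MM by apply/eqP; rewrite -mdeg_eq0 hd.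
  have m'0 : m' = 0%MM.
    apply/mnmP => j; rewrite mnm0E; apply/eqP; rewrite eqn0Ngt; apply/negP => pj.
    set a := enum_val j.
    pose u : U r := if a \in S then inr (zq t a) else inl (inl a).
    have : (0 < g m' (enum_rank u))%N.
      apply: leq_trans (g_ge t S m' j (enum_rank u)); rewrite muln_gt0 pj andbT /u.
      by case: ifP => aS; rewrite ?C1 ?C3 ?aS ?eqxx.
    by rewrite -hg m0 g0 mnm0E.
  by rewrite m0 m'0 subrr; apply: I0.
have [j pj] : exists j, (0 < m j)%N.
  case: (pickP (fun j => 0 < m j)%N) => [j hj|none]; first by exists j.
  by move: hd; rewrite mdegE big1 // => j _; move: (none j) => /= /negbT; rewrite -eqn0Ngt => /eqP.
set a := enum_val j.
have le : (U_(rk a) <= m)%MM by rewrite lep1mP /a enum_valK -lt0n.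
set m1 := (m - U_(rk a))%MM.
have em : m = (m1 + U_(rk a))%MM by rewrite /m1 submK.
have [m'' [I1 g'' p'']] : exists m'', [/\ I ('X_[m'] - 'X_[m'']), g m'' = g m' & (0 < m'' (rk a))%N].
  by apply: (@move_to a m1 m'); rewrite -em.
have le'' : (U_(rk a) <= m'')%MM by rewrite lep1mP -lt0n.
set m1'' := (m'' - U_(rk a))%MM.
have em'' : m'' = (m1'' + U_(rk a))%MM by rewrite /m1'' submK.
have I2 : I ('X_[m1] - 'X_[m1'']).
  apply: IH.
    by move: hd; rewrite em mdegD mdeg1 addn1 => -[].
  apply: (@addIm _ (g U_(rk a))); rewrite -!gD -em -em'' hg g''.
  by [].
have I3 : I ('X_[m] - 'X_[m'']) by rewrite em em'' !mpolyXD -mulrBl mulrC; apply: IM.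
have -> : 'X_[m] - 'X_[m'] = ('X_[m] - 'X_[m'']) - ('X_[m'] - 'X_[m'']) :> Rpoly r K
  by rewrite opprB addrA subrK.
exact: IB.
Qed.

Definition hX (j : 'I_(kN r)) : {mpoly K[kU r]} := 'X_[mono (enum_val j)].
Definition phi (p : Rpoly r K) : {mpoly K[kU r]} := mmap (@mpolyC (kU r) K) hX p.

Lemma phiX m : phi 'X_[m] = 'X_[g m].
Proof. by rewrite /phi mmapX /mmap1 mprodXnE. Qed.

Lemma phiM p q : phi (p * q) = phi p * phi q.
Proof. by rewrite /phi rmorphM. Qed.

Lemma phiB p q : phi (p - q) = phi p - phi q.
Proof. by rewrite /phi rmorphB. Qed.

Lemma phi1 : phi 1 = 1.
Proof. by rewrite /phi rmorph1. Qed.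

Lemma phi_coef p k : (phi p)@_k = \sum_(m <- msupp p) p@_m * (g m == k)%:R.
Proof.
rewrite /phi /mmap raddf_sum /=; apply: eq_bigr => m _.
by rewrite -/(hX) /mmap1 mprodXnE mcoeffCM mcoeffX.
Qed.

Lemma phi_fgen (i : 'I_n) (a b : N) : (i < t)%N -> a \in S -> b \in S -> phi (fgen K i a b) = 0.
Proof.
move=> hi aS bS.
rewrite /fgen /xv -!mpolyXD phiB !phiX !gD !gU (mono_sw hi aS bS).
by rewrite subrr.
Qed.

Lemma I_ker p : I p -> phi p = 0.
Proof.
move=> [s [hs ->]]; rewrite /phi raddf_sum /= big_seq; apply: big1 => x xs.
rewrite rmorphM /=.
have [i [a [b [hi /and3P[aS bS _] ->]]]] := hs x xs.
by move: (phi_fgen hi aS bS); rewrite /phi => ->; rewrite mulr0.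
Qed.

Lemma ker_I p : phi p = 0 -> I p.
Proof.
move=> h0.
set s := msupp p.
pose rep m := nth 0%MM s (find (fun m' => g m' == g m) s).
have repP m : m \in s -> rep m \in s /\ g (rep m) = g m.
  move=> ms; have hs : has (fun m' => g m' == g m) s by apply/hasP; exists m.
  split; first by rewrite mem_nth // -has_find.
  by apply/eqP; exact: (nth_find 0%MM hs).
have -> : p = \sum_(m <- s) p@_m *: ('X_[m] - 'X_[rep m]) + \sum_(m <- s) p@_m *: 'X_[rep m].
  rewrite -big_split /= {1}(mpolyE p); apply: eq_bigr => m _.
  by rewrite -scalerDr subrK.
apply: ID.
  rewrite big_seq; apply: (big_ind (in_ideal _)); [exact: I0| exact: ID|].
  move=> m ms; rewrite -mul_mpolyC; apply: IM; apply: (key erefl).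
  by case: (repP m ms).
suff -> : \sum_(m <- s) p@_m *: 'X_[rep m] = 0 by exact: I0.
apply/mpolyP => k; rewrite mcoeff0 raddf_sum /=.
under eq_bigr => m _ do rewrite mcoeffZ mcoeffX.
case: (boolP ((k \in s) && (rep k == k))) => [/andP[ks /eqP rk]| nk].
  rewrite -[RHS](@mcoeff0 _ _ (g k)) -h0 phi_coef big_seq [RHS]big_seq.
  apply: eq_bigr => m ms.
  rewrite (_ : (rep m == k) = (g m == g k)) //.
  apply/idP/idP => [/eqP <-|/eqP e].
    by case: (repP m ms) => _ ->.
  have -> : rep m = rep k by rewrite /rep e.
  by rewrite rk.
rewrite big_seq big1 // => m ms.
case: (eqVneq (rep m) k) => [e|]; last by rewrite mulr0.
case: (repP m ms) => rs gr.
move: nk; rewrite -e rs /=.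
have -> : rep (rep m) = rep m by rewrite /rep gr.
by rewrite eqxx.
Qed.

End Main.

Theorem theorem4p3 (K : fieldType) (n : nat) (r : 'I_n -> nat)
  (hr : forall i, (0 < r i)%N) (t : nat) (ht : (1 <= t <= n)%N)
  (T S : {set Ngrid r}) (hT : switchable t T) (hS : conn_class T S) :
  prime_ideal (in_ideal (@gensIS K n r t S)).
Proof.
case: hS => a0 a0T ->.
split.
  move/(I_ker hT); rewrite phi1 => /eqP; by rewrite oner_eq0.
move=> p q /(I_ker hT); rewrite phiM => /eqP; rewrite mulf_eq0.
by case/orP => /eqP /(ker_I hT a0T); [left|right].
Qed.
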